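(* Consider the binary random graph affiliation mixture model with $Q\ge1$ groups, all $\pi_q>0$, and $\alpha\ne\beta$. Let $m_1=\mathbb E(X_{12})$, $m_2=\mathbb E(X_{12}X_{13})$, $m_3=\mathbb E(X_{12}X_{13}X_{23})$. Then $$2m_1^3-3m_1m_2+m_3=0\quad\text{if and only if}\quad Q=1.$$
   Context: Random graph mixture model: nodes have i.i.d. latent groups $Z_i\in\{1,\dots,Q\}$ with $\pi_q=\mathbb P(Z_i=q)$, $\sum_q\pi_q=1$; edge variables $X_{ij}$ ($i<j$) are conditionally independent given all $Z$'s, with law of $X_{ij}$ depending only on $(Z_i,Z_j)$. Binary affiliation model: $X_{ij}\in\{0,1\}$ with $\mathbb P(X_{ij}=1\mid Z_i=q,Z_j=l)=\alpha$ if $q=l$ and $=\beta$ if $q\ne l$ (when $Q=1$ only $\alpha$ is used). *)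

(* Defs.v *)
From HB Require Import structures.
From mathcomp Require Import all_boot all_order all_algebra.
Set Implicit Arguments. Unset Strict Implicit. Unset Printing Implicit Defensive.
Import Order.TTheory GRing.Theory Num.Theory.
Local Open Scope ring_scope.

Definition aff_prob (R : ringType) (Q : nat) (alpha beta : R) (q l : 'I_Q) : R :=
  if q == l then alpha else beta.

(* Moments of the mixture, obtained by conditioning on the i.i.d. latent
   groups Z_1, Z_2, Z_3 (edges conditionally independent given Z). *)
Definition mom1 (R : ringType) (Q : nat) (pi : 'I_Q -> R) (alpha beta : R) : R :=
  \sum_(q < Q) \sum_(l < Q) pi q * pi l * aff_prob alpha beta q l.

Definition mom2 (R : ringType) (Q : nat) (pi : 'I_Q -> R) (alpha beta : R) : R :=
  \sum_(q < Q) \sum_(l < Q) \sum_(r < Q)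
    pi q * pi l * pi r * (aff_prob alpha beta q l * aff_prob alpha beta q r).

Definition mom3 (R : ringType) (Q : nat) (pi : 'I_Q -> R) (alpha beta : R) : R :=
  \sum_(q < Q) \sum_(l < Q) \sum_(r < Q)
    pi q * pi l * pi r *
    (aff_prob alpha beta q l * aff_prob alpha beta q r * aff_prob alpha beta l r).

(* Main.v *)
Require Import Defs.
From HB Require Import structures.
From mathcomp Require Import all_boot all_order all_algebra.
From Stdlib Require Import Ring.
Import Order.TTheory GRing.Theory Num.Theory.

Set Implicit Arguments.
Section Gen.
Variables (T : Type) (z o : T) (ad mu su : T -> T -> T) (op : T -> T).
Hypothesis RTh : ring_theory z o ad mu su op eq.
Add Ring GR : RTh.
Declare Scope gen_scope.
Local Infix "+" := ad : gen_scope.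
Local Infix "*" := mu : gen_scope.
Local Infix "-" := su : gen_scope.
Local Open Scope gen_scope.
Let two := o + o.
Let three := o + (o + o).

Lemma G1 p a b g S : p * a * g + b * S = b * (p * g + S) + (a - b) * p * g.
Proof. ring. Qed.
Lemma Gm1 p a b : p * (b * o + (a - b) * p * o) = p * (b + (a - b) * p + z * p * p).
Proof. ring. Qed.

Lemma Gp p X Y Z : p * (X + Y * p + Z * p * p) = X * p + Y * (p * p) + Z * (p * p * p).
Proof. ring. Qed.
Lemma Gm2h q l r A B : q * l * r * (A * B) = q * (l * A * o) * (r * B * o).
Proof. ring. Qed.
Lemma Gm2 p a b : p * (b * o + (a - b) * p * o) * (b * o + (a - b) * p * o)
  = p * (b * b + (two * b * (a - b)) * p + ((a - b) * (a - b)) * p * p).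
Proof. unfold two; ring. Qed.
Lemma Gm3h q l r A B C : q * l * r * (A * B * C) = q * (l * A * (r * B * C)).
Proof. ring. Qed.
Lemma Gm3i l b d q A : l * (b * (b + d * l) + d * q * A) = b * b * l + b * d * (l * l) + d * q * (l * A).
Proof. ring. Qed.
Lemma Gm3 p a b s :
  p * (b * (b * b * o + b * (a - b) * s + (a - b) * p * (b + (a - b) * p))
       + (a - b) * p * (b * (b + (a - b) * p) + (a - b) * p * a))
  = p * ((b * b * b + b * b * (a - b) * s) + (two * b * b * (a - b)) * p
         + (two * b * (a - b) * (a - b) + (a - b) * (a - b) * a) * p * p).
Proof. unfold two; ring. Qed.
Lemma Gfin a b s t :
  two * ((b + (a - b) * s + z * t) * ((b + (a - b) * s + z * t) * (b + (a - b) * s + z * t)))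
  - three * (b + (a - b) * s + z * t) * (b * b + (two * b * (a - b)) * s + ((a - b) * (a - b)) * t)
  + ((b * b * b + b * b * (a - b) * s) + (two * b * b * (a - b)) * s
         + (two * b * (a - b) * (a - b) + (a - b) * (a - b) * a) * t)
  = (a - b) * ((a - b) * (a - b)) * (two * (s * (s * s)) - three * s * t + t).
Proof. unfold two, three; ring. Qed.

Let four := two * two.
Lemma Ga u v : two * (u * (u * u)) - three * u * v + v = v * (o - three * u) + two * (u * (u * u)).
Proof. unfold two, three; ring. Qed.
Lemma Gb u v : two * (u * (u * u)) - three * u * v + v = two * (u * (u * u)) - v * (three * u - o).
Proof. unfold two, three; ring. Qed.
Lemma Gc v w : (v * w) * (v * w) = (v * v) * (w * w).
Proof. ring. Qed.
Lemma Gd u : (two * (u * (u * u))) * (two * (u * (u * u))) = (u * (u * u)) * (two * two * (u * (u * u))).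
Proof. unfold two; ring. Qed.
Lemma Ge u : two * two * (u * (u * u)) - (three * u - o) * (three * u - o) = (u - o) * (u - o) * ((three * u - o) + u).
Proof. unfold two, three; ring. Qed.
Lemma Gz : two * (o * (o * o)) - three * o * o + o = z.
Proof. unfold two, three; ring. Qed.
Lemma Gz2 : two - three + o = z.
Proof. unfold two, three; ring. Qed.
End Gen.

Unset Implicit Arguments.
Local Open Scope ring_scope.

Lemma RT (R : realFieldType) : @ring_theory R 0 1 +%R *%R (fun x y => x - y) -%R eq.
Proof. split=> //; [exact: add0r|exact: addrC|exact: addrA|exact: mul1r|exact: mulrC|exact: mulrA|exact: mulrDl|exact: subrr]. Qed.

Section Main.
Variables (R : realFieldType) (Q : nat) (pi : 'I_Q -> R) (alpha beta : R).
Hypothesis hsum : \sum_(q < Q) pi q = 1.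
Notation aff := (aff_prob alpha beta).

Lemma collapse q (g : 'I_Q -> R) :
  \sum_(l < Q) pi l * aff q l * g l =
  beta * \sum_(l < Q) pi l * g l + (alpha - beta) * pi q * g q.
Proof.
rewrite (bigD1 q) //= [X in beta * X](bigD1 q) //= {1}/aff_prob eqxx.
have -> : \sum_(i < Q | i != q) pi i * aff q i * g i
        = beta * \sum_(i < Q | i != q) pi i * g i.
  rewrite mulr_sumr; apply: eq_bigr => i hi.
  by rewrite /aff_prob eq_sym (negbTE hi) mulrAC mulrC mulrA.
exact: (G1 (RT R)).
Qed.

Let s2 := \sum_(q < Q) pi q * pi q.
Let s3 := \sum_(q < Q) pi q * pi q * pi q.

Lemma sum1 : \sum_(l < Q) pi l * 1 = 1.
Proof. by rewrite -[RHS]hsum; apply: eq_bigr => l _; rewrite mulr1. Qed.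

Lemma poly_sum X Y Z :
  \sum_(q < Q) pi q * (X + Y * pi q + Z * pi q * pi q) = X + Y * s2 + Z * s3.
Proof.
under eq_bigr => q _ do rewrite (Gp (RT R)).
by rewrite !big_split /= -!mulr_sumr hsum mulr1.
Qed.

Lemma aff_sym (q l : 'I_Q) : aff q l = aff l q.
Proof. by rewrite /aff_prob eq_sym. Qed.

Lemma inner (q : 'I_Q) : \sum_(l < Q) pi l * aff q l = beta + (alpha - beta) * pi q.
Proof.
transitivity (\sum_(l < Q) pi l * aff q l * (fun _ => 1) l).
  by apply: eq_bigr => l _; rewrite mulr1.
by rewrite collapse sum1 /= !mulr1.
Qed.

Lemma m1E : mom1 pi alpha beta = beta + (alpha - beta) * s2 + 0 * s3.
Proof.
rewrite /mom1 -poly_sum; apply: eq_bigr => q _.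
transitivity (pi q * \sum_(l < Q) pi l * aff q l * (fun _ => 1) l).
  by rewrite mulr_sumr; apply: eq_bigr => l _; rewrite mulr1 mulrA.
rewrite collapse sum1; exact: (Gm1 (RT R)).
Qed.

Lemma m2E : mom2 pi alpha beta = beta * beta + (2 * beta * (alpha - beta)) * s2
   + ((alpha - beta) * (alpha - beta)) * s3.
Proof.
rewrite /mom2 -poly_sum; apply: eq_bigr => q _.
transitivity (pi q * (\sum_(l < Q) pi l * aff q l * (fun _ => 1) l)
                   * (\sum_(l < Q) pi l * aff q l * (fun _ => 1) l)).
  rewrite [pi q * _]mulr_sumr big_distrl /=; apply: eq_bigr => l _.
  rewrite mulr_sumr; apply: eq_bigr => r _; exact: (Gm2h (RT R)).
rewrite collapse sum1; exact: (Gm2 (RT R)).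
Qed.

Lemma m3E : mom3 pi alpha beta =
  (beta * beta * beta + beta * beta * (alpha - beta) * s2)
  + (2 * beta * beta * (alpha - beta)) * s2
  + (2 * beta * (alpha - beta) * (alpha - beta) + (alpha - beta) * (alpha - beta) * alpha) * s3.
Proof.
rewrite /mom3 -poly_sum; apply: eq_bigr => q _.
transitivity (pi q * \sum_(l < Q) pi l * aff q l *
   (fun l => beta * (beta + (alpha - beta) * pi l) + (alpha - beta) * pi q * aff l q) l).
  rewrite mulr_sumr; apply: eq_bigr => l _ /=.
  transitivity (pi q * (pi l * aff q l * (\sum_(r < Q) pi r * aff q r * (fun r => aff l r) r))).
    rewrite !mulr_sumr; apply: eq_bigr => r _; exact: (Gm3h (RT R)).
  by rewrite collapse inner.
rewrite collapse /=.
have -> : \sum_(l < Q) pi l * (beta * (beta + (alpha - beta) * pi l) + (alpha - beta) * pi q * aff l q)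
   = beta * beta * 1 + beta * (alpha - beta) * s2 + (alpha - beta) * pi q * (beta + (alpha - beta) * pi q).
  under eq_bigr => l _ do rewrite (Gm3i (RT R)).
  rewrite !big_split /= -!mulr_sumr hsum -(inner q); congr (_ + _ * _).
  by apply: eq_bigr => l _; rewrite aff_sym.
rewrite /aff_prob eqxx.
exact: (Gm3 (RT R)).
Qed.
End Main.

Lemma alg (R : realFieldType) (u v : R) : 0 < u -> 0 <= v -> v * v < u * (u * u) ->
  0 < 2 * (u * (u * u)) - 3 * u * v + v.
Proof.
move=> hu hv hvv.
have u3 : 0 < u * (u * u) by rewrite !mulr_gt0.
have h2 : 0 < 2 * (u * (u * u)) by rewrite mulr_gt0.
case: (leP (3 * u) 1) => h.
  rewrite (Ga (RT R)) addrC; apply: (lt_le_trans h2).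
  by rewrite lerDl mulr_ge0 // subr_ge0.
rewrite (Gb (RT R)) subr_gt0 ltNge; apply/negP => hle.
have w0 : 0 < 3 * u - 1 by rewrite subr_gt0.
have := ler_pM (ltW h2) (ltW h2) hle hle.
have -> : v * (3 * u - 1) * (v * (3 * u - 1)) = (v * v) * ((3 * u - 1) * (3 * u - 1)).
  exact: (Gc (RT R)).
have -> : 2 * (u * (u * u)) * (2 * (u * (u * u))) = (u * (u * u)) * (2 * 2 * (u * (u * u))).
  exact: (Gd (RT R)).
move=> h3.
have h4 : v * v * ((3 * u - 1) * (3 * u - 1)) < u * (u * u) * ((3 * u - 1) * (3 * u - 1)).
  by rewrite ltr_pM2r // mulr_gt0.
have := le_lt_trans h3 h4; rewrite ltr_pM2l // => h5.
have : 0 <= 2 * 2 * (u * (u * u)) - (3 * u - 1) * (3 * u - 1).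
  have -> : 2 * 2 * (u * (u * u)) - (3 * u - 1) * (3 * u - 1) = (u - 1) * (u - 1) * ((3 * u - 1) + u).
    exact: (Ge (RT R)).
  apply: mulr_ge0; first by rewrite -expr2 sqr_ge0.
  by rewrite addr_ge0 // ltW.
by rewrite subr_ge0 leNgt h5.
Qed.

Lemma key (R : realFieldType) (Q : nat) (pi : 'I_Q -> R)
  (hpos : forall q, 0 < pi q) (hQ2 : (1 < Q)%N) :
  0 < \sum_(q < Q) pi q * pi q /\ 0 <= \sum_(q < Q) pi q * pi q * pi q /\
  (\sum_(q < Q) pi q * pi q * pi q) * (\sum_(q < Q) pi q * pi q * pi q)
   < (\sum_(q < Q) pi q * pi q) * ((\sum_(q < Q) pi q * pi q) * (\sum_(q < Q) pi q * pi q)).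
Proof.
pose i0 : 'I_Q := Ordinal (ltnW hQ2).
have [q0 _ hmax] := @arg_maxP _ R _ i0 predT pi isT.
have [q1 hq1] : exists q1 : 'I_Q, q1 != q0.
  case: (eqVneq q0 i0) => h0.
    by exists (Ordinal hQ2); rewrite h0; apply/eqP => /(congr1 val).
  by exists i0; rewrite eq_sym.
set s2 := \sum_(q < Q) pi q * pi q.
set s3 := \sum_(q < Q) pi q * pi q * pi q.
set M := pi q0.
have hs3 : s3 <= M * s2.
  rewrite /s3 /s2 mulr_sumr; apply: ler_sum => q _.
  rewrite [M * _]mulrC; apply: ler_wpM2l; first by rewrite mulr_ge0 // ltW.
  exact: hmax.
have hs2 : M * M < s2.
  rewrite /s2 (bigD1 q0) //= ltrDl (bigD1 q1) //=.
  apply: (lt_le_trans (mulr_gt0 (hpos q1) (hpos q1))).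
  by rewrite lerDl sumr_ge0 // => i _; rewrite mulr_ge0 // ltW.
have s2p : 0 < s2 := le_lt_trans (mulr_ge0 (ltW (hpos q0)) (ltW (hpos q0))) hs2.
have s3p : 0 <= s3.
  by rewrite sumr_ge0 // => i _; rewrite !mulr_ge0 // ltW.
split=> //; split=> //.
apply: (le_lt_trans (ler_pM s3p s3p hs3 hs3)).
have -> : M * s2 * (M * s2) = (M * M) * (s2 * s2) by exact: (Gc (RT R)).
by rewrite ltr_pM2r // mulr_gt0.
Qed.

Theorem proposition2 (R : realFieldType) (Q : nat) (pi : 'I_Q -> R)
    (alpha beta : R)
    (hQ : (1 <= Q)%N)
    (hpi_pos : forall q, 0 < pi q)
    (hpi_sum : \sum_(q < Q) pi q = 1)
    (ha : 0 <= alpha <= 1) (hb : 0 <= beta <= 1)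
    (hab : alpha != beta) :
  2 * mom1 pi alpha beta ^+ 3
    - 3 * mom1 pi alpha beta * mom2 pi alpha beta
    + mom3 pi alpha beta = 0
  <-> Q = 1%N.
Proof.
have -> : 2 * mom1 pi alpha beta ^+ 3
    - 3 * mom1 pi alpha beta * mom2 pi alpha beta
    + mom3 pi alpha beta =
   (alpha - beta) * ((alpha - beta) * (alpha - beta)) *
   (2 * ((\sum_(q < Q) pi q * pi q) * ((\sum_(q < Q) pi q * pi q) * (\sum_(q < Q) pi q * pi q)))
    - 3 * (\sum_(q < Q) pi q * pi q) * (\sum_(q < Q) pi q * pi q * pi q)
    + \sum_(q < Q) pi q * pi q * pi q).
  rewrite (m1E _ _ _ _ _ hpi_sum) (m2E _ _ _ _ _ hpi_sum) (m3E _ _ _ _ _ hpi_sum).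
  exact: (Gfin (RT R)).
split.
  move=> /eqP; rewrite !mulf_eq0 subr_eq0 (negbTE hab) /= => hf.
  apply/eqP; rewrite eqn_leq hQ andbT leqNgt; apply/negP => hQ2.
  have [h1 [h2 h3]] := @key _ _ _ hpi_pos hQ2.
  by have := @alg _ _ _ h1 h2 h3; rewrite (eqP hf) ltxx.
move=> hQ1; subst Q.
rewrite big_ord1 in hpi_sum; rewrite !big_ord1 hpi_sum.
have -> : 2 * (1 * 1 * (1 * 1 * (1 * 1))) - 3 * (1 * 1) * (1 * 1 * 1) + 1 * 1 * 1 = 0 :> R.
  by rewrite !mulr1; exact: (Gz2 (RT R)).
by rewrite mulr0.
Qed.
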